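(* In the setting described in the context, let $D\subseteq A\subseteq D\cup T$. Let $[e_1,e_2]\in T$ and set $A'=A\cup\{[e_1,e_2]\}$. Let $L_1,L_2\in\Pi_A$ be the circuits with $e_1\in L_1$ and $e_2\in L_2$. Then $$\Pi_{A'}=\Pi'\cup\big(\Pi_A\setminus\{L_1,L_2,L^*_{1},L^*_{2}\}\big),$$ where the duals $L_1^*,L_2^*$ are taken with respect to $A$, and $\Pi'$ is given by the following two cases. (i) If $L_1=L_2$, or $L_1=L_1^*$, or $L_2=L_2^*$, then $\Pi'=\{L_1\cup L_1^*\cup L_2\cup L_2^*\}$, and this single circuit is shorted with respect to $A'$. (ii) Otherwise, $\Pi'=\{L_1\cup L_2^*,\ L_1^*\cup L_2\}$; these two circuits are duals of each other with respect to $A'$, and neither is shorted. In addition, if $L_2=L_1^*$ then $\Pi_{A'}=\Pi_A$.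
   Context: Let $n\ge4$, $V=\{0,\dots,n-1\}$, and let $E=\{(u,v)\in V\times V:u\ne v\}$ be the set of arcs, written $uv$. Let $\chi_e\in\mathbb R^E$ be unit vectors and $\chi_F=\sum_{e\in F}\chi_e$. Let $\delta^\pm(w)$ be the arcs leaving/entering $w$, let $\delta^+(S)=\{uv:u\in S,v\notin S\}$, let $\mathcal S=\{S\subset V:2\le|S|\le n-2\}$, and let $x(F)=\sum_{e\in F}x_e$. The polytope is $P^n=\{x\in\mathbb R^E: x(\delta^+(w))=x(\delta^-(w))=1\ \forall w,\ x(\delta^+(S))\ge1\ \forall S\in\mathcal S,\ x\ge0\}$. Fix $\bar x\in P^n\cap\{0,\tfrac12\}^E$ and let $E_{\bar x}=\{e:\bar x_e=\tfrac12\}$. For $a\in\{0,1\}^E$ let $\mathrm{pr}(a)=\sum_{e\in E_{\bar x}}a_e\chi_e$. Let $\mathcal S_{\bar x}=\{S\in\mathcal S:\bar x(\delta^+(S))=1\}$. Define the sets $$D=\{\mathrm{pr}(\chi_{\delta^+(u)}),\mathrm{pr}(\chi_{\delta^-(u)}):u\in V\}, \qquad T=\{\mathrm{pr}(\chi_{\delta^+(S)}):S\in\mathcal S_{\bar x}\}.$$ Every vector of $D\cup T$ equals $\chi_{e_1}+\chi_{e_2}$ for two distinct arcs $e_1,e_2\in E_{\bar x}$; it is written $[e_1,e_2]=[e_2,e_1]$. Let $A$ be a set with $D\subseteq A\subseteq D\cup T$. On $E_{\bar x}$ define the relation $e\sim_A e'$ iff there is $\bar e\in E_{\bar x}$ with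 $[e,\bar e]\in A$ and $[\bar e,e']\in A$. Let $\equiv_A$ be its transitive closure; this is an equivalence relation. The equivalence classes are called circuits, and they form the circuit partition $\Pi_A$ of $E_{\bar x}$. For $L\in\Pi_A$, the set $\{\bar e\in E_{\bar x}:\exists e\in L,\ [e,\bar e]\in A\}$ is nonempty and contained in a unique circuit, denoted $L^*_A$ and called the dual of $L$. The pair $\{L,L^*_A\}$ is a circuit pair. $L$ is called shorted if $L^*_A=L$. Define $\langle L,L^*\rangle_A=\{[e,\bar e]\in A: e\in L,\ \bar e\in L^*_A\}$. *)

(* Defs.v *)
From HB Require Import structures.
From mathcomp Require Import all_boot all_order all_algebra.
Set Implicit Arguments. Unset Strict Implicit. Unset Printing Implicit Defensive.
Import Order.TTheory GRing.Theory Num.Theory.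
Local Open Scope ring_scope.

Definition darc (n : nat) : finType := {p : 'I_n * 'I_n | p.1 != p.2}.

Section Defs.
Variable n : nat.
Implicit Types (x : {ffun darc n -> rat}) (F : {set darc n}) (S : {set 'I_n}).

Definition atail (e : darc n) : 'I_n := (val e).1.
Definition ahead (e : darc n) : 'I_n := (val e).2.

Definition outarcs (w : 'I_n) : {set darc n} := [set e | atail e == w].
Definition inarcs (w : 'I_n) : {set darc n} := [set e | ahead e == w].
Definition cut S : {set darc n} := [set e | (atail e \in S) && (ahead e \notin S)].

Definition xsum x F : rat := \sum_(e in F) x e.

Definition calS S : bool := (2 <= #|S|)%N && (#|S| <= n - 2)%N.

Definition inP x : Prop :=
  [/\ forall w : 'I_n, xsum x (outarcs w) = 1 /\ xsum x (inarcs w) = 1,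
      forall S, calS S -> 1 <= xsum x (cut S)
    & forall e, 0 <= x e].

Definition Ex x : {set darc n} := [set e | x e == 1 / 2%:R].

(* A 0/1 vector a in R^E is encoded by its support {e | a_e = 1}.
   pr(chi_F) is then encoded by F :&: E_xbar, and [e1,e2] by [set e1; e2]. *)
Definition pr x F : {set darc n} := F :&: Ex x.

Definition Sx x : {set {set 'I_n}} := [set S | calS S && (xsum x (cut S) == 1)].

Definition Dset x : {set {set darc n}} :=
  [set pr x (outarcs u) | u : 'I_n] :|: [set pr x (inarcs u) | u : 'I_n].

Definition Tset x : {set {set darc n}} := [set pr x (cut S) | S in Sx x].

Definition simA x (A : {set {set darc n}}) : rel (darc n) :=
  fun e e' => [&& e \in Ex x, e' \in Ex x &
     [exists eb in Ex x, ([set e; eb] \in A) && ([set eb; e'] \in A)]].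

Definition Pi x (A : {set {set darc n}}) : {set {set darc n}} :=
  equivalence_partition (connect (simA x A)) (Ex x).

Definition nbrs x (A : {set {set darc n}}) (L : {set darc n}) : {set darc n} :=
  [set eb in Ex x | [exists e in L, [set e; eb] \in A]].

Definition dual x (A : {set {set darc n}}) (L : {set darc n}) : {set darc n} :=
  odflt set0 [pick L' in Pi x A | nbrs x A L \subset L'].

Definition shorted x (A : {set {set darc n}}) (L : {set darc n}) : bool :=
  dual x A L == L.

End Defs.

(* Main.v *)
Require Import Defs.
From HB Require Import structures.
From mathcomp Require Import all_boot all_order all_algebra.
From mathcomp Require Import ring.
Import Order.TTheory GRing.Theory Num.Theory.
Set Implicit Arguments. Unset Strict Implicit. Unset Printing Implicit Defensive.

Record GH (T : finType) (V : {set T}) (adj st : rel T) : Prop := {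
  gh_adjC : forall a b, adj a b = adj b a;
  gh_adjV : forall a b, adj a b -> a \in V;
  gh_adjN : forall a, a \in V -> exists b, adj a b;
  gh_stE : forall a c, st a c = [exists b, adj a b && adj b c] }.

Definition Kc (T : finType) (V : {set T}) (st : rel T) a := [set c in V | connect st a c].
Definition PiG (T : finType) (V : {set T}) (st : rel T) := equivalence_partition (connect st) V.

Section G.
Variables (T : finType) (V : {set T}) (adj st : rel T).
Hypothesis H : GH V adj st.

Lemma stC_ a c : st a c -> st c a.
Proof.
rewrite !(gh_stE H) => /existsP [b /andP [h1 h2]]; apply/existsP; exists b.
by rewrite (gh_adjC H) h2 (gh_adjC H) h1.
Qed.

Lemma stC : symmetric st.
Proof. by move=> a c; apply/idP/idP; apply: stC_. Qed.

Lemma R_sym : connect_sym st.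
Proof. exact: sym_connect_sym stC. Qed.

Lemma R_equiv : equivalence_rel (connect st).
Proof.
move=> a b c; split => // hab; apply/idP/idP => h.
- by apply: connect_trans h; rewrite R_sym.
- exact: connect_trans hab h.
Qed.

Lemma adjV2 a b : adj a b -> b \in V.
Proof. by rewrite (gh_adjC H); apply: (gh_adjV H). Qed.

Lemma R_V a c : connect st a c -> (a \in V) = (c \in V).
Proof.
apply: closed_connect => u v; rewrite (gh_stE H) => /existsP [b /andP [h1 h2]].
by rewrite (gh_adjV H h1) (adjV2 h2).
Qed.

Lemma keyP f e e' g : adj f e -> connect st e e' -> adj e' g -> connect st f g.
Proof.
move=> hfe /connectP [p hp ->] {e'}.
elim: p e f hfe hp => [|b p IH] e f hfe /= hp hg.
  by apply: connect1; rewrite (gh_stE H); apply/existsP; exists e; rewrite hfe hg.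
case/andP: hp; rewrite (gh_stE H) => /existsP [c /andP [hec hcb]] hp.
apply: connect_trans (connect1 _) (IH b c hcb hp hg).
by rewrite (gh_stE H); apply/existsP; exists e; rewrite hfe hec.
Qed.

Lemma Kc_eq a b : connect st a b -> Kc V st a = Kc V st b.
Proof.
move=> hab; apply/setP => c; rewrite !inE; congr (_ && _).
exact: (R_equiv a b c).2 hab.
Qed.

Lemma Kc_self a : a \in V -> a \in Kc V st a.
Proof. by move=> aV; rewrite inE aV connect0. Qed.

Lemma Kc_sub a c : c \in Kc V st a -> c \in V.
Proof. by rewrite inE => /andP []. Qed.

Lemma memK a b : a \in V -> (a \in Kc V st b) = (Kc V st b == Kc V st a).
Proof.
move=> aV; apply/idP/eqP => [|->]; last exact: Kc_self.
by rewrite inE => /andP [_ /Kc_eq].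
Qed.

Lemma Kmem_R y z a : connect st y z -> (y \in Kc V st a) = (z \in Kc V st a).
Proof.
move=> hyz; rewrite !inE (R_V hyz); congr (_ && _).
by rewrite R_sym (R_equiv y z a).2 // R_sym.
Qed.

Lemma eqiR : {in V & &, equivalence_rel (connect st)}.
Proof. by move=> a b c _ _ _; apply: R_equiv. Qed.

Lemma pblockK a : a \in V -> pblock (PiG V st) a = Kc V st a.
Proof.
move=> aV; have [_ tiP _] := and3P (equivalence_partitionP eqiR).
apply: def_pblock tiP _ _; last exact: Kc_self.
exact: imset_f.
Qed.


Lemma nbK a z f : adj a z -> adj a f -> z \in Kc V st f.
Proof.
move=> haz haf; rewrite inE (adjV2 haz) /=.
have hfa : adj f a by rewrite (gh_adjC H).
exact: keyP hfa (connect0 st a) haz.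
Qed.

Lemma dual_spec (N : {set T}) a f : a \in V -> adj a f ->
  (forall b, (b \in N) = [exists e in Kc V st a, adj e b]) ->
  odflt set0 [pick L' in PiG V st | N \subset L'] = Kc V st f.
Proof.
move=> aV haf hN.
have fV : f \in V by apply: adjV2 haf.
have [_ tiP _] := and3P (equivalence_partitionP eqiR).
case: pickP => [L' /andP [hL' hNL]|/(_ (Kc V st f))] /=.
  have fN : f \in N by rewrite hN; apply/existsP; exists a; rewrite Kc_self.
  rewrite -(def_pblock tiP hL' (subsetP hNL _ fN)).
  exact: pblockK.
rewrite (imset_f _ fV) /= => /negbT /negP []; apply/subsetP => b.
rewrite hN => /existsP [e /andP [heK heb]].
rewrite inE (adjV2 heb) /=.
have hfa : adj f a by rewrite (gh_adjC H).
by move: heK; rewrite inE => /andP [_ hae]; exact: keyP hfa hae heb.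
Qed.

End G.

Definition newE (T : eqType) (e1 e2 : T) (a b : T) :=
  ((a == e1) && (b == e2)) || ((a == e2) && (b == e1)).

Section H.
Variables (T : finType) (V : {set T}) (adj st adj2 st2 : rel T) (e1 e2 f1 f2 : T).
Hypotheses (H1 : GH V adj st) (H2 : GH V adj2 st2).
Hypothesis adj2E : forall a b, adj2 a b = adj a b || newE e1 e2 a b.
Hypotheses (e1V : e1 \in V) (e2V : e2 \in V) (hf1 : adj e1 f1) (hf2 : adj e2 f2).

Local Notation K := (Kc V st).
Local Notation X := (K e1 :|: K f2).
Local Notation Y := (K f1 :|: K e2).

Definition Bf a := if a \in X :|: Y then
  (if [disjoint X & Y] then (if a \in X then X else Y) else X :|: Y) else K a.

Lemma newP a b : newE e1 e2 a b -> (a = e1 /\ b = e2) \/ (a = e2 /\ b = e1).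
Proof. by case/orP => /andP [/eqP -> /eqP ->]; [left|right]. Qed.

Lemma new_new a b c : newE e1 e2 a b -> newE e1 e2 b c -> a = c.
Proof.
by case/newP => [[-> ->]|[-> ->]] /newP [[h ->]|[h ->]].
Qed.

Lemma B_R y z : connect st y z -> Bf y = Bf z.
Proof. by move=> hyz; rewrite /Bf !in_setU !(Kmem_R H1 _ hyz) (Kc_eq H1 hyz). Qed.

Lemma BX y z : y \in X -> z \in X -> Bf y = Bf z.
Proof.
move=> hy hz.
by rewrite /Bf (subsetP (subsetUl X Y) _ hy) (subsetP (subsetUl X Y) _ hz) hy hz.
Qed.

Lemma BY y z : y \in Y -> z \in Y -> Bf y = Bf z.
Proof.
move=> hy hz.
rewrite /Bf (subsetP (subsetUr X Y) _ hy) (subsetP (subsetUr X Y) _ hz).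
by case: ifP => // hd; rewrite (disjointFl hd hy) (disjointFl hd hz).
Qed.

Lemma e1X : e1 \in X. Proof. by rewrite in_setU (Kc_self st e1V). Qed.
Lemma e2Y : e2 \in Y. Proof. by rewrite in_setU (Kc_self st e2V) orbT. Qed.

Lemma st2_B y z : st2 y z -> Bf y = Bf z.
Proof.
rewrite (gh_stE H2) => /existsP [b /andP []]; rewrite !adj2E.
case/orP => [h1|/newP [[-> ->]|[-> ->]]]; case/orP.
- move=> h2; apply: B_R; apply: connect1; rewrite (gh_stE H1).
  by apply/existsP; exists b; rewrite h1 h2.
- case/newP => [[hb ->]|[hb ->]]; subst b.
  + apply: BY; last exact: e2Y.
    by rewrite in_setU (nbK H1 _ hf1) // (gh_adjC H1).
  + apply: BX; last exact: e1X.
    by rewrite in_setU (nbK H1 _ hf2) ?orbT // (gh_adjC H1).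
- by move=> h2; apply: BX; [exact: e1X | rewrite in_setU (nbK H1 h2 hf2) orbT].
- have n12 : newE e1 e2 e1 e2 by rewrite /newE !eqxx.
  by move/(new_new n12) => ->.
- by move=> h2; apply: BY; [exact: e2Y | rewrite in_setU (nbK H1 h2 hf1)].
- have n21 : newE e1 e2 e2 e1 by rewrite /newE !eqxx orbT.
  by move/(new_new n21) => ->.
Qed.


Lemma R2_B a c : connect st2 a c -> Bf a = Bf c.
Proof.
move=> h.
have cl : closed st2 [pred z | Bf z == Bf a].
  by move=> u v /st2_B huv; rewrite !inE huv.
by have := closed_connect cl h; rewrite !inE eqxx => /esym/eqP.
Qed.

Lemma B_self c : c \in V -> c \in Bf c.
Proof.
move=> cV; rewrite /Bf; case: ifP => [hc|_]; last by rewrite inE cV connect0.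
case: ifP => _ //; case: ifP => // hx.
by move: hc; rewrite in_setU hx.
Qed.

Lemma sK a : K a \subset V.
Proof. by apply/subsetP => u /Kc_sub. Qed.

Lemma B_sub a c : c \in Bf a -> c \in V.
Proof.
have sX : X \subset V by rewrite subUset !sK.
have sY : Y \subset V by rewrite subUset !sK.
rewrite /Bf; case: ifP => _; [case: ifP => _; [case: ifP => _|]|]; apply: subsetP.
- exact: sX.
- exact: sY.
- by rewrite subUset sX sY.
- exact: sK.
Qed.

Lemma R_R2 a c : connect st a c -> connect st2 a c.
Proof.
apply: connect_sub => u v; rewrite (gh_stE H1) => /existsP [b /andP [h1 h2]].
by apply: connect1; rewrite (gh_stE H2); apply/existsP; exists b; rewrite !adj2E h1 h2.
Qed.

Lemma st2_e1f2 : connect st2 e1 f2.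
Proof.
apply: connect1; rewrite (gh_stE H2); apply/existsP; exists e2.
by rewrite !adj2E hf2 /newE !eqxx /= orbT.
Qed.

Lemma st2_e2f1 : connect st2 e2 f1.
Proof.
apply: connect1; rewrite (gh_stE H2); apply/existsP; exists e1.
by rewrite !adj2E hf1 /newE !eqxx /= !orbT.
Qed.

Lemma R2X a : a \in X -> connect st2 e1 a.
Proof.
case/setUP; rewrite inE => /andP [_ h]; first exact: R_R2.
exact: connect_trans st2_e1f2 (R_R2 h).
Qed.

Lemma R2Y a : a \in Y -> connect st2 e2 a.
Proof.
case/setUP; rewrite inE => /andP [_ h]; last exact: R_R2.
exact: connect_trans st2_e2f1 (R_R2 h).
Qed.

Lemma R2_tr u a c : connect st2 u a -> connect st2 u c -> connect st2 a c.
Proof. by move=> h1 h2; apply: connect_trans h2; rewrite (R_sym H2). Qed.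

Lemma B_R2 a c : a \in V -> c \in Bf a -> connect st2 a c.
Proof.
move=> aV; rewrite /Bf; case: ifP => haXY; last by rewrite inE => /andP [_ /R_R2].
case: ifP => hd.
  case: ifP => haX hc; first exact: R2_tr (R2X haX) (R2X hc).
  have haY : a \in Y by move: haXY; rewrite in_setU haX.
  exact: R2_tr (R2Y haY) (R2Y hc).
have e12 : connect st2 e1 e2.
  move/negbT: hd; rewrite -setI_eq0 => /set0Pn [u]; rewrite inE => /andP [hu1 hu2].
  by apply: connect_trans (R2X hu1) _; rewrite (R_sym H2); exact: R2Y hu2.
have hv : forall v, v \in X :|: Y -> connect st2 e1 v.
  move=> v /setUP [] hv; first exact: R2X.
  exact: connect_trans e12 (R2Y hv).
by move=> hc; apply: R2_tr (hv _ haXY) (hv _ hc).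
Qed.

Lemma K2_B a : a \in V -> Kc V st2 a = Bf a.
Proof.
move=> aV; apply/setP => c; rewrite inE; apply/andP/idP => [[cV h]|h].
  by rewrite (R2_B h) B_self.
by split; [exact: B_sub h | exact: B_R2].
Qed.

Lemma Pi2_B : PiG V st2 = [set Bf a | a in V].
Proof. by rewrite /PiG /equivalence_partition; apply: eq_in_imset => a aV; exact: K2_B. Qed.

Lemma Pi_K : PiG V st = [set K a | a in V].
Proof. by []. Qed.

Lemma Keq_R a b : b \in V -> K a = K b -> connect st a b.
Proof. by move=> bV h; have := Kc_self st bV; rewrite -h inE => /andP []. Qed.

Lemma f1V : f1 \in V. Proof. exact: (adjV2 H1 hf1). Qed.
Lemma f2V : f2 \in V. Proof. exact: (adjV2 H1 hf2). Qed.

Lemma caseI : (K e1 = K e2 \/ K e1 = K f1 \/ K e2 = K f2) <-> ~~ [disjoint X & Y].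
Proof.
have nd : forall u, u \in X -> u \in Y -> ~~ [disjoint X & Y].
  by move=> u hx hy; apply/negP => hd; rewrite (disjointFl hd hy) in hx.
split.
  case => [h|[h|h]].
  - by apply: (nd e1 e1X); rewrite in_setU -h (Kc_self st e1V) orbT.
  - by apply: (nd e1 e1X); rewrite in_setU -h (Kc_self st e1V).
  - by apply: (nd e2 _ e2Y); rewrite in_setU -h (Kc_self st e2V) orbT.
rewrite -setI_eq0 => /set0Pn [u]; rewrite inE => /andP [hx hy].
have uV : u \in V by move: hx => /setUP [] /Kc_sub.
case/setUP: hx => hx; case/setUP: hy => hy.
- by right; left; move: hx hy; rewrite !(memK H1 _ uV) => /eqP -> /eqP ->.
- by left; move: hx hy; rewrite !(memK H1 _ uV) => /eqP -> /eqP ->.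
- left; apply: (Kc_eq H1).
  have h12 : connect st f1 f2 by apply: (Keq_R f2V); move: hx hy; rewrite !(memK H1 _ uV) => /eqP -> /eqP ->.
  by apply: (keyP H1 hf1 h12); rewrite (gh_adjC H1).
- by right; right; move: hx hy; rewrite !(memK H1 _ uV) => /eqP -> /eqP ->.
Qed.

Lemma memXY a : a \in V ->
  (a \in X :|: Y) = (K a \in [set K e1; K e2; K f1; K f2]).
Proof.
move=> aV; rewrite !in_setU !(memK H1 _ aV) !inE !(eq_sym (K a)).
by case: (K e1 == K a); case: (K e2 == K a); case: (K f1 == K a); case: (K f2 == K a).
Qed.

Lemma part1 : ~~ [disjoint X & Y] ->
  [set Bf a | a in V] =
  (K e1 :|: K f1 :|: K e2 :|: K f2) |: (PiG V st :\: [set K e1; K e2; K f1; K f2]).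
Proof.
move=> hd.
have hB : forall a, a \in X :|: Y -> Bf a = X :|: Y.
  by move=> a ha; rewrite /Bf ha (negbTE hd).
have -> : K e1 :|: K f1 :|: K e2 :|: K f2 = X :|: Y.
  apply/setP => u; rewrite !in_setU.
  by case: (u \in K e1); case: (u \in K f1); case: (u \in K e2); case: (u \in K f2).
have e1XY : e1 \in X :|: Y by rewrite in_setU e1X.
apply/setP => L; rewrite in_setU1 in_setD; apply/imsetP/idP.
  move=> [a aV ->]; case haXY: (a \in X :|: Y); first by rewrite hB // eqxx.
  apply/orP; right; rewrite /Bf haXY -memXY // haXY /=.
  exact: imset_f.
case/orP => [/eqP ->|/andP [hn hP]]; first by exists e1 => //; rewrite hB.
move: hP => /imsetP [a aV hL]; subst L; exists a => //.
have hn' : (K a \in [set K e1; K e2; K f1; K f2]) = false := negbTE hn.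
by rewrite /Bf memXY // hn'.
Qed.

Lemma part2 : [disjoint X & Y] ->
  [set Bf a | a in V] =
  [set X; Y] :|: (PiG V st :\: [set K e1; K e2; K f1; K f2]).
Proof.
move=> hd.
have e1XY : e1 \in X :|: Y by rewrite in_setU e1X.
have e2XY : e2 \in X :|: Y by rewrite in_setU e2Y orbT.
have hB1 : Bf e1 = X by rewrite /Bf e1XY hd e1X.
have hB2 : Bf e2 = Y by rewrite /Bf e2XY hd (disjointFl hd e2Y).
apply/setP => L; rewrite in_setU in_set2 in_setD; apply/imsetP/idP.
  move=> [a aV ->]; case haXY: (a \in X :|: Y).
    by rewrite /Bf haXY hd; case: ifP; rewrite eqxx ?orbT.
  apply/orP; right; rewrite /Bf haXY -memXY // haXY /=.
  exact: imset_f.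
case/orP => [/orP [/eqP ->|/eqP ->]|/andP [hn hP]].
- by exists e1.
- by exists e2.
move: hP => /imsetP [a aV hL]; subst L; exists a => //.
have hn' : (K a \in [set K e1; K e2; K f1; K f2]) = false := negbTE hn.
by rewrite /Bf memXY // hn'.
Qed.

Lemma part3 : K e2 = K f1 -> [set Bf a | a in V] = PiG V st.
Proof.
move=> h; rewrite Pi_K; apply: eq_in_imset => a aV.
have h2s : K f2 = K e1.
  apply: (Kc_eq H1); have h21 : connect st e2 f1 by exact: (Keq_R f1V h).
  have a1 : adj f1 e1 by rewrite (gh_adjC H1).
  have a2 : adj f2 e2 by rewrite (gh_adjC H1).
  exact: (keyP H1 a2 h21 a1).
rewrite /Bf h2s h !setUid; case: ifP => // haU.
have hK : forall b, a \in K b -> K b = K a by move=> b; rewrite (memK H1 _ aV) => /eqP.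
case: ifP => hd.
  by case: ifP => [/hK|hn]; last by move: haU; rewrite in_setU hn => /hK.
have e1f1 : K e1 = K f1.
  move/negbT: hd; rewrite -setI_eq0 => /set0Pn [u]; rewrite inE => /andP [hu1 hu2].
  have uV : u \in V by apply: Kc_sub hu1.
  by move: hu1 hu2; rewrite !(memK H1 _ uV) => /eqP -> /eqP ->.
by rewrite -e1f1 setUid; move: haU; rewrite in_setU -e1f1 orbb => /hK.
Qed.

Lemma Bf_e1_nd : ~~ [disjoint X & Y] -> Bf e1 = X :|: Y.
Proof. by move=> hd; rewrite /Bf in_setU e1X (negbTE hd). Qed.
Lemma Bf_e2_nd : ~~ [disjoint X & Y] -> Bf e2 = X :|: Y.
Proof. by move=> hd; rewrite /Bf in_setU e2Y orbT (negbTE hd). Qed.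
Lemma Bf_e1_d : [disjoint X & Y] -> Bf e1 = X.
Proof. by move=> hd; rewrite /Bf in_setU e1X hd. Qed.
Lemma Bf_e2_d : [disjoint X & Y] -> Bf e2 = Y.
Proof. by move=> hd; rewrite /Bf in_setU e2Y orbT hd (disjointFl hd e2Y). Qed.
Lemma XneY : [disjoint X & Y] -> X != Y.
Proof. by move=> hd; apply/eqP => h; move: (disjointFl hd e2Y); rewrite h e2Y. Qed.

End H.
Local Open Scope ring_scope.

Definition adjA n (x : {ffun darc n -> rat}) (A : {set {set darc n}}) (a b : darc n) :=
  [&& a \in Ex x, b \in Ex x & [set a; b] \in A].

Lemma set2E (T : finType) (a b c d : T) :
  ([set a; b] == [set c; d]) = ((a == c) && (b == d)) || ((a == d) && (b == c)).
Proof.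
apply/eqP/idP => [h|]; last first.
  by case/orP => /andP [/eqP -> /eqP ->] //; apply: setUC.
have ha : a \in [set c; d] by rewrite -h set21.
have hb : b \in [set c; d] by rewrite -h set22.
have hc : c \in [set a; b] by rewrite h set21.
have hd : d \in [set a; b] by rewrite h set22.
rewrite !in_set2 in ha hb hc hd.
case/orP: ha => /eqP ?; case/orP: hb => /eqP ?; subst; rewrite ?eqxx ?orbT //=.
- by move: hd; rewrite orbb => /eqP ->; rewrite eqxx.
- by move: hc; rewrite orbb => /eqP ->; rewrite eqxx.
Qed.

Section C.
Variables (n : nat) (x : {ffun darc n -> rat}).
Hypothesis hxP : inP x.
Hypothesis hx01 : forall e, x e = 0 \/ x e = 1 / 2%:R.

Lemma card_half F : xsum x F = 1 -> #|F :&: Ex x| = 2%N.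
Proof.
have h0 : \sum_(e in F :\: Ex x) x e = 0.
  apply: big1 => e; rewrite in_setD inE => /andP [he _].
  by case: (hx01 e) => // h; rewrite h eqxx in he.
rewrite /xsum (big_setID (Ex x)) /= h0 addr0 (eq_bigr (fun=> 1 / 2%:R)); last by move=> e; rewrite in_setI inE => /andP [_ /eqP].
rewrite sumr_const => h; rewrite -[(1 / 2%:R) *+ _]mulr_natr in h.
have : (#|F :&: Ex x|%:R : rat) = 2%:R.
  have -> : (#|F :&: Ex x|%:R : rat) = 2%:R * (1 / 2%:R * #|F :&: Ex x|%:R) by field.
  by rewrite h mulr1.
by move/eqP; rewrite eqr_nat => /eqP.
Qed.

Lemma GH_of (A : {set {set darc n}}) : Dset x \subset A -> GH (Ex x) (adjA x A) (simA x A).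
Proof.
move=> hDA; split.
- by move=> a b; rewrite /adjA setUC andbCA.
- by move=> a b /and3P [].
- move=> e eE.
  set S := outarcs (atail e) :&: Ex x.
  have SA : S \in A.
    apply: (subsetP hDA); rewrite /Dset in_setU; apply/orP; left.
    exact: (imset_f (fun u => pr x (outarcs u))).
  have cS : #|S| = 2%N by apply: card_half; case: hxP => hd _ _; case: (hd (atail e)).
  have eS : e \in S by rewrite in_setI eE inE eqxx.
  have SE : S \subset Ex x by apply: subsetIr.
  move/eqP: cS => /cards2P [a [b [_ hab]]].
  move: (eS); rewrite hab in_set2 => /orP [] /eqP hea; subst e.
    exists b; rewrite /adjA -hab SA (subsetP SE _ eS) (subsetP SE) //.
    by rewrite hab set22.
  exists a; rewrite /adjA setUC -hab SA (subsetP SE _ eS) (subsetP SE) //.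
  by rewrite hab set21.
- move=> a c; rewrite /simA /adjA; apply/idP/existsP.
    case/and3P => ha hc /existsP [b /andP [hb /andP [h1 h2]]].
    by exists b; rewrite ha hc hb h1 h2.
  case=> b /andP [/and3P [ha hb h1] /and3P [_ hc h2]].
  by rewrite ha hc /=; apply/existsP; exists b; rewrite hb h1 h2.
Qed.

Lemma dual_conc (A : {set {set darc n}}) (G : GH (Ex x) (adjA x A) (simA x A)) a f :
  a \in Ex x -> adjA x A a f ->
  dual x A (Kc (Ex x) (simA x A) a) = Kc (Ex x) (simA x A) f.
Proof.
move=> aE haf; rewrite /dual; apply: (dual_spec G aE haf) => b.
rewrite /nbrs inE.
apply/andP/existsP => [[hb /existsP [e /andP [he hS]]]|[e /andP [he /and3P [heE hbE hS]]]].
  by exists e; rewrite he /adjA hb hS (Kc_sub he).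
by split => //; apply/existsP; exists e; rewrite he hS.
Qed.

Lemma adj2E_conc (A : {set {set darc n}}) (e1 e2 : darc n) : e1 \in Ex x -> e2 \in Ex x -> forall a b,
  adjA x ([set e1; e2] |: A) a b = adjA x A a b || newE e1 e2 a b.
Proof.
move=> e1E e2E a b; rewrite /adjA in_setU1 set2E -/(newE e1 e2 a b).
case hn: (newE e1 e2 a b); last by rewrite /= orbF.
rewrite orbT andbT /=; case/newP: hn => [[-> ->]|[-> ->]]; by rewrite e1E e2E.
Qed.

End C.

Unset Implicit Arguments.
Theorem mainTheorem6 (n : nat) (hn : (4 <= n)%N) (x : {ffun darc n -> rat})
  (hxP : inP x) (hx01 : forall e, x e = 0 \/ x e = 1 / 2%:R)
  (A : {set {set darc n}})
  (hDA : Dset x \subset A) (hAT : A \subset Dset x :|: Tset x)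
  (e1 e2 : darc n) (he : [set e1; e2] \in Tset x) :
  let A' := [set e1; e2] |: A in
  let L1 := pblock (Pi x A) e1 in
  let L2 := pblock (Pi x A) e2 in
  let L1s := dual x A L1 in
  let L2s := dual x A L2 in
  let rest := Pi x A :\: [set L1; L2; L1s; L2s] in
  [/\ (L1 = L2 \/ L1 = L1s \/ L2 = L2s) ->
        let M := L1 :|: L1s :|: L2 :|: L2s in
        Pi x A' = M |: rest /\ shorted x A' M,
      ~ (L1 = L2 \/ L1 = L1s \/ L2 = L2s) ->
        let M1 := L1 :|: L2s in
        let M2 := L1s :|: L2 in
        [/\ Pi x A' = [set M1; M2] :|: rest,
            dual x A' M1 = M2, dual x A' M2 = M1,
            ~~ shorted x A' M1 & ~~ shorted x A' M2]
    & L2 = L1s -> Pi x A' = Pi x A].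
Proof.
cbv zeta.
have GA := GH_of hxP hx01 hDA.
have hDA' : Dset x \subset [set e1; e2] |: A by apply: subset_trans hDA (subsetUr _ _).
have GA' := GH_of hxP hx01 hDA'.
have [e1E e2E] : e1 \in Ex x /\ e2 \in Ex x.
  case/imsetP: he => S _ hS.
  by rewrite /pr in hS; split; apply: (subsetP (subsetIr (cut S) (Ex x))); rewrite -hS ?set21 ?set22.
have [f1 hf1] := gh_adjN GA e1E.
have [f2 hf2] := gh_adjN GA e2E.
have E2 := adj2E_conc A e1E e2E.
have a12 : adjA x ([set e1; e2] |: A) e1 e2 by rewrite E2 /newE !eqxx orbT.
have a21 : adjA x ([set e1; e2] |: A) e2 e1 by rewrite E2 /newE !eqxx !orbT.
have PE : Pi x ([set e1; e2] |: A) =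
   [set Bf (Ex x) (simA x A) e1 e2 f1 f2 a | a in Ex x].
  exact: (Pi2_B GA GA' E2 e1E e2E hf1 hf2).
have K2B := K2_B GA GA' E2 e1E e2E hf1 hf2.
rewrite PE (pblockK GA e1E) (pblockK GA e2E) (dual_conc GA e1E hf1) (dual_conc GA e2E hf2).
split.
- move/(caseI GA e1E e2E hf1 hf2) => hd.
  split; first exact: (part1 GA e1E hd).
  have hM : Kc (Ex x) (simA x A) e1 :|: Kc (Ex x) (simA x A) f1 :|:
            Kc (Ex x) (simA x A) e2 :|: Kc (Ex x) (simA x A) f2 =
            Kc (Ex x) (simA x ([set e1; e2] |: A)) e1.
    rewrite K2B // (Bf_e1_nd e1E hd).
    apply/setP => u; rewrite !in_setU.
    by case: (u \in Kc _ _ e1); case: (u \in Kc _ _ f1); case: (u \in Kc _ _ e2); case: (u \in Kc _ _ f2).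
  rewrite /shorted hM (dual_conc GA' e1E a12) !K2B //.
  by rewrite (Bf_e1_nd e1E hd) (Bf_e2_nd e2E hd).
- move=> hnc.
  have hd : [disjoint Kc (Ex x) (simA x A) e1 :|: Kc (Ex x) (simA x A) f2 &
                     Kc (Ex x) (simA x A) f1 :|: Kc (Ex x) (simA x A) e2].
    by apply/negPn/negP => h; apply: hnc; exact: (caseI GA e1E e2E hf1 hf2).2 h.
  have hX : Kc (Ex x) (simA x A) e1 :|: Kc (Ex x) (simA x A) f2 =
            Kc (Ex x) (simA x ([set e1; e2] |: A)) e1 by rewrite K2B // (Bf_e1_d e1E hd).
  have hY : Kc (Ex x) (simA x A) f1 :|: Kc (Ex x) (simA x A) e2 =
            Kc (Ex x) (simA x ([set e1; e2] |: A)) e2 by rewrite K2B // (Bf_e2_d e2E hd).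
  have d1 := dual_conc GA' e1E a12.
  have d2 := dual_conc GA' e2E a21.
  have ne := XneY e2E hd.
  split.
  + exact: (part2 GA e1E e2E hd).
  + by rewrite hX d1 hY.
  + by rewrite hY d2 hX.
  + by rewrite /shorted hX d1 -hY -hX eq_sym.
  + by rewrite /shorted hY d2 -hY -hX.
- by move=> h; rewrite (part3 GA hf1 hf2 h).
Qed.
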